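(* Assume $\alpha\neq1$ and $\mu\neq0$. Take $c_k=1$ and $t_k=k$ for all $k\ge0$, and choose the constants $a_k$ recursively by $a_k=\exp(\mu_k)$ for $k\ge1$, where $\mu_k$ is the location parameter of $\log Z_k$ (which depends only on $a_1,\dots,a_{k-1}$). Then for every $k\ge1$, $Z_k\le Y_k$ almost surely and $\log Z_k\sim\mathcal S(\alpha,\beta,\sigma_k,\mu_k)$ with $$\mu_k=\mu+\log\frac{e^{\mu k}-1}{e^{\mu}-1},\qquad \sigma_k^\alpha=\sigma^\alpha\left(1+\sum_{j=1}^{k-1}\left(1-\frac{e^{\mu j}-1}{e^{\mu k}-1}\right)^\alpha\right).$$
   Context: Stable laws: for $\alpha^*\in(0,2]$, $\beta^*\in[-1,1]$, $\sigma^*>0$, $\mu^*\in\mathbb R$, write $Z\sim\mathcal S(\alpha^*,\beta^*,\sigma^*,\mu^* )$ if the real random variable $Z$ has characteristic function $\mathbb E e^{i\theta Z}=\exp\{i\theta\mu^*-|\sigma^*\theta|^{\alpha^*}(1-i\beta^*\operatorname{sgn}(\theta)\tan\frac{\pi\alpha^*}{2})\}$ when $\alpha^*\neq1$, and $\mathbb E e^{i\theta Z}=\exp\{i\theta\mu^*-|\sigma^*\theta|(1+i\beta^*\frac{2}{\pi}\operatorname{sgn}(\theta)\log|\theta|)\}$ when $\alpha^*=1$. Wealth process: on a probability space $(\Omega,\mathcal F,\mathbb P)$, $X:[0,\infty)\times\Omega\to(0,\infty)$ is a process such that $\log X$ is a Lévy process (càdlàg paths, independent increments) with, for all $0\le s<t$,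 $\log\frac{X(t)}{X(s)}\sim\mathcal S(\alpha,\beta,\sigma(t-s)^{1/\alpha},\mu(t-s))$, where $\alpha\in(0,2]$, $\beta\in[-1,1]$, $\sigma>0$, $\mu\in\mathbb R$ are fixed. Regular investing: given times $0=t_0<t_1<\cdots$ and amounts $c_k>0$ invested at $t_k$, set $X_k=X(t_k)/X(t_{k-1})$ for $k\ge1$, and define the terminal wealth recursively by $Y_1=c_0X_1$, $Y_k=X_k(Y_{k-1}+c_{k-1})$ for $k\ge2$. Lower bound process: given constants $a_{k}>0$ ($k\ge1$), set $b_{k}=\frac{a_{k}}{a_{k}+c_{k}}$, $Z_1=Y_1$, and $Z_k=X_k(a_{k-1}+c_{k-1})\left(\frac{Z_{k-1}}{a_{k-1}}\right)^{b_{k-1}}$ for $k\ge2$. *)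

(* Defs.v *)
From HB Require Import structures.
From mathcomp Require Import all_boot all_order all_algebra.
From mathcomp Require Import all_classical all_reals all_analysis.
Set Implicit Arguments. Unset Strict Implicit. Unset Printing Implicit Defensive.
Import Order.TTheory GRing.Theory Num.Theory.
Import numFieldNormedType.Exports.
Local Open Scope classical_set_scope.
Local Open Scope ring_scope.

Section defs.
Context {d : measure_display} {T : measurableType d} {R : realType}.

Definition stable_cf_re (a b s m th : R) : R :=
  if a != 1 then expR (- (`|s * th| `^ a))
  else expR (- `|s * th|).
Definition stable_cf_im_arg (a b s m th : R) : R :=
  if a != 1 then th * m + (`|s * th| `^ a) * b * Num.sg th * tan (pi * a / 2)
  else th * m - `|s * th| * b * (2 / pi) * Num.sg th * ln `|th|.
(* E exp(i th Z) = exp(-|s th|^a) (cos A + i sin A), with A the imaginary part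
   of the exponent; we write the identity componentwise. *)
Definition stable_law (P : probability T R) (Z : T -> R) (a b s m : R) : Prop :=
  [/\ 0 < a <= 2, -1 <= b <= 1, 0 < s, measurable_fun setT Z &
   forall th : R,
     ('E_P[fun w => cos (th * Z w)] =
        (stable_cf_re a b s m th * cos (stable_cf_im_arg a b s m th))%:E)%E /\
     ('E_P[fun w => sin (th * Z w)] =
        (stable_cf_re a b s m th * sin (stable_cf_im_arg a b s m th))%:E)%E].

Definition mutually_independent (P : probability T R) (n : nat)
  (Z : nat -> T -> R) : Prop :=
  forall B : nat -> set R, (forall i, measurable (B i)) ->
    P [set w | forall i, (i < n)%N -> B i (Z i w)] =
    (\prod_(i < n) P (Z i @^-1` B i))%E.

Definition cadlag_paths (X : R -> T -> R) : Prop :=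
  (forall w t, 0 <= t -> (fun u => ln (X u w)) @ at_right t --> ln (X t w)) /\
  (forall w t, 0 < t ->
     exists l : R, (fun u => ln (X u w)) @ at_left t --> l).

Definition stable_wealth_process (P : probability T R) (X : R -> T -> R)
  (a b s m : R) : Prop :=
  [/\ (forall t, 0 <= t ->
         measurable_fun setT (X t) /\ forall w, 0 < X t w),
      (forall w, ln (X 0 w) = 0),
      cadlag_paths X,
      (forall (n : nat) (u : nat -> R), 0 <= u 0%N ->
          (forall i, (i < n)%N -> u i < u i.+1) ->
          mutually_independent P n
            (fun i w => ln (X (u i.+1) w) - ln (X (u i) w))) &
      (forall s' t, 0 <= s' -> s' < t ->
          stable_law P (fun w => ln (X t w / X s' w)) a b
            (s * (t - s') `^ a^-1) (m * (t - s')))].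

Definition gross_return (X : R -> T -> R) (t : nat -> R) (k : nat) : T -> R :=
  fun w => X (t k) w / X (t k.-1) w.

(* Terminal wealth Y_k (Y 0 := 0, so that Y_1 = c_0 X_1). *)
Fixpoint Ywealth (X : R -> T -> R) (t c : nat -> R) (k : nat) : T -> R :=
  match k with
  | 0 => fun _ => 0
  | k'.+1 => fun w => gross_return X t k'.+1 w * (Ywealth X t c k' w + c k')
  end.

Definition bcoef (a c : nat -> R) (k : nat) : R := a k / (a k + c k).

(* Lower bound process Z_k (Z 0 := 0 is unused). *)
Fixpoint Zlow (X : R -> T -> R) (t c a : nat -> R) (k : nat) : T -> R :=
  match k with
  | 0 => fun _ => 0
  | 1 => Ywealth X t c 1
  | (k'.+1 as k1).+1 => fun w =>
      gross_return X t k1.+1 w * (a k1 + c k1) *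
      (Zlow X t c a k1 w / a k1) `^ bcoef a c k1
  end.

End defs.

(* Main.v *)
Require Import Defs.
From HB Require Import structures.
From mathcomp Require Import all_boot all_order all_algebra.
From mathcomp Require Import all_classical all_reals all_analysis.
From mathcomp Require Import measurable_realfun lra ring.
Import Order.TTheory GRing.Theory Num.Theory.
Import numFieldNormedType.Exports.
Local Open Scope classical_set_scope.
Local Open Scope ring_scope.
Set Implicit Arguments. Unset Strict Implicit. Unset Printing Implicit Defensive.


Section bm.
Context d (T : measurableType d) (R : realType) (P : probability T R).

Definition bnd (f : T -> R) := exists M, forall x, `|f x| <= M.
Definition bm (f : T -> R) := measurable_fun setT f /\ bnd f.

Lemma bm_int f : bm f -> P.-integrable setT (EFin \o f).
Proof.
move=> [mf [M hM]]; apply: measurable_bounded_integrable => //.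
  exact: (le_lt_trans (probability_le1 _ measurableT) (ltry _)).
exists M; split; first by rewrite num_real.
by move=> x Mx z _; apply: (le_trans (hM z)); exact: ltW.
Qed.

Lemma expectE f : bm f -> ('E_P[f] = (Rintegral P setT f)%:E)%E.
Proof.
move=> bf; rewrite unlock /Rintegral fineK//.
exact: integrable_fin_num (bm_int bf).
Qed.

Lemma bmM f g : bm f -> bm g -> bm (fun x => f x * g x).
Proof.
move=> [mf [M hM]] [mg [N hN]]; split; first exact: measurable_funM.
exists (M * N) => x; rewrite normrM ler_pM//.
Qed.

Lemma bmD f g : bm f -> bm g -> bm (fun x => f x + g x).
Proof.
move=> [mf [M hM]] [mg [N hN]]; split; first exact: measurable_funD.
exists (M + N) => x; exact: (le_trans (ler_normD _ _) (lerD (hM x) (hN x))).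
Qed.

Lemma bm_cst c : bm (fun=> c).
Proof. by split => //; exists `|c|. Qed.

Lemma bm_comp (g : R -> R) (f : T -> R) : measurable_fun setT g ->
  (exists M, forall x, `|g x| <= M) -> measurable_fun setT f -> bm (g \o f).
Proof.
move=> mg [M hM] mf; split; first exact: measurableT_comp.
by exists M => x; exact: hM.
Qed.

Lemma bm_prod (I : Type) (s : seq I) (F : I -> T -> R) :
  (forall i, bm (F i)) -> bm (fun x => \prod_(i <- s) F i x).
Proof.
move=> hF; elim: s => [|i s IH].
  by under [X in bm X]eq_fun do rewrite big_nil; exact: bm_cst.
under [X in bm X]eq_fun do rewrite big_cons.
exact: bmM.
Qed.

Lemma Rint_indic (A : set T) : measurable A ->
  Rintegral P setT (\1_A) = fine (P A).
Proof. by move=> mA; rewrite /Rintegral integral_indic// setIT. Qed.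

End bm.

Section bm2.
Context d (T : measurableType d) (R : realType) (P : probability T R).

Lemma bm_sum (I : Type) (s : seq I) (F : I -> T -> R) :
  (forall i, bm (F i)) -> bm (fun x => \sum_(i <- s) F i x).
Proof.
move=> hF; elim: s => [|i s IH].
  by under [X in bm X]eq_fun do rewrite big_nil; exact: bm_cst.
under [X in bm X]eq_fun do rewrite big_cons.
exact: bmD.
Qed.

Lemma bm_indic (Z : T -> R) (B : set R) : measurable_fun setT Z -> measurable B ->
  bm (fun w => (\1_B (Z w) : R)).
Proof.
move=> mZ mB; apply: (@bm_comp _ _ _ (\1_B)) => //.

by exists 1 => x; rewrite indicE; case: (x \in B); rewrite ?normr1 ?normr0.
Qed.

Lemma indic_pre (Z : T -> R) (B : set R) w : (\1_B (Z w) : R) = (\1_(Z @^-1` B) w : R).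
Proof. by rewrite !indicE; congr (_%:R); apply/idP/idP; rewrite !inE. Qed.

Lemma Rint_cst0 : Rintegral P setT (fun=> 0 : R) = 0.
Proof. by rewrite Rintegral_cst// mul0r. Qed.

Lemma fineP1 : fine (P setT) = 1 :> R.
Proof. by rewrite probability_setT. Qed.

Lemma Rint_cst (c : R) : Rintegral P setT (fun=> c) = c.
Proof. by rewrite Rintegral_cst// fineP1 mulr1. Qed.

Lemma Rint_bound f M : bm f -> (forall x, `|f x| <= M) ->
  `|Rintegral P setT f| <= M.
Proof.
move=> bf hM; apply: (le_trans (le_normr_Rintegral measurableT (bm_int P bf))).
rewrite -[X in _ <= X](Rint_cst M); apply: (le_Rintegral measurableT).
- apply: (bm_int P); split; last by exists M => x; rewrite normr_id hM.
  exact: measurableT_comp (bf.1).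
- by apply: (bm_int P); exact: bm_cst.
- by move=> x _; exact: hM.
Qed.

Lemma sum_pick N (r : nat -> R) t : (t < N)%N ->
  \sum_(i < N) r i * (t == i)%:R = r t.
Proof.
move=> tN; rewrite (bigD1 (Ordinal tN)) //= eqxx mulr1 big1 ?addr0 //.
move=> i /eqP ne; case: eqP => [e|]; last by rewrite mulr0.
by exfalso; apply: ne; apply: val_inj.
Qed.

Lemma small_eq0 (x C : R) : (forall n : nat, `|x| <= C / n.+1%:R) -> x = 0.
Proof.
move=> h; apply/eqP; apply/negPn/negP => x0.
have ax : 0 < `|x| by rewrite normr_gt0.
have C0 : 0 <= C by have := h 0%N; rewrite divr1 => /(le_trans (normr_ge0 _)).
pose n := Num.truncn (C / `|x|).
have := h n; rewrite ler_pdivlMr // -ler_pdivlMl // mulrC => hle.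
have := truncnS_gt (C / `|x|); rewrite -/n => hlt.
by have := lt_le_trans hlt hle; rewrite ltxx.
Qed.

End bm2.

Section ssl.
Context d (T : measurableType d) (R : realType) (P : probability T R).
Variables (Z H : T -> R) (c : R).
Hypotheses (mZ : measurable_fun setT Z) (bH : bm H).
Hypothesis hyp : forall B, measurable B ->
  Rintegral P setT (fun w => \1_B (Z w) * H w) = c * fine (P (Z @^-1` B)).

Lemma Rint_indicZ B : measurable B ->
  Rintegral P setT (fun w => \1_B (Z w)) = fine (P (Z @^-1` B)).
Proof.
move=> mB; under eq_Rintegral do rewrite indic_pre.
rewrite Rint_indic//; rewrite -[_ @^-1` _]setTI; exact: mZ.
Qed.

Lemma bm_simple N (r : nat -> R) (B : nat -> set R) :
  (forall i, measurable (B i)) ->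
  bm (fun w => \sum_(i < N) r i * \1_(B i) (Z w)).
Proof.
move=> mB; apply: bm_sum => i; apply: bmM; first exact: bm_cst.
exact: bm_indic.
Qed.

Lemma ssl_step N (r : nat -> R) (B : nat -> set R) :
  (forall i, measurable (B i)) ->
  Rintegral P setT (fun w => (\sum_(i < N) r i * \1_(B i) (Z w)) * H w) =
  c * Rintegral P setT (fun w => \sum_(i < N) r i * \1_(B i) (Z w)).
Proof.
move=> mB; elim: N => [|N IH].
  under eq_Rintegral do rewrite big_ord0 mul0r.
  under [in RHS]eq_Rintegral do rewrite big_ord0.
  by rewrite Rint_cst0 mulr0.
under eq_Rintegral do rewrite big_ord_recr /= mulrDl.
under [in RHS]eq_Rintegral do rewrite big_ord_recr /=.
rewrite RintegralD//; last 2 first.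
- by apply: (bm_int P); apply: bmM => //; exact: bm_simple.
- apply: (bm_int P); apply: bmM => //; apply: bmM; first exact: bm_cst.
  exact: bm_indic.
rewrite RintegralD//; last 2 first.
- by apply: (bm_int P); exact: bm_simple.
- apply: (bm_int P); apply: bmM; first exact: bm_cst.
  exact: bm_indic.
rewrite IH mulrDr; congr (_ + _).
under eq_Rintegral do rewrite -mulrA.
rewrite RintegralZl//; last first.
  by apply: (bm_int P); apply: bmM => //; exact: bm_indic.
rewrite RintegralZl//; last first.
  by apply: (bm_int P); exact: bm_indic.
by rewrite hyp// Rint_indicZ// mulrCA.
Qed.

End ssl.

Section approx.
Context (R : realType).

Lemma approx_g (g : R -> R) (M : R) n : measurable_fun setT g ->
  (forall x, `|g x| <= M) ->
  exists N (r : nat -> R) (B : nat -> set R), (forall i, measurable (B i)) /\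
   forall x, `|g x - \sum_(i < N) r i * \1_(B i) x| <= n.+1%:R^-1.
Proof.
move=> mg hM.
have M0 : 0 <= M by apply: le_trans (hM 0).
pose K := (Num.truncn (M * n.+1%:R)).+1.
have MK : M * n.+1%:R < K%:R by exact: truncnS_gt.
pose gp x := g x * n.+1%:R + K%:R.
have mgp : measurable_fun setT gp.
  apply: measurable_funD => //; apply: measurable_funM => //.
pose B i := gp @^-1` `[i%:R, i.+1%:R[.
have mB i : measurable (B i).
  rewrite /B -[_ @^-1` _]setTI; exact: mgp.
pose r (i : nat) : R := (i%:R - K%:R) / n.+1%:R.
exists (K + K)%N, r, B; split => // x.
have gp0 : 0 <= gp x.
  have : - M * n.+1%:R <= g x * n.+1%:R.
    rewrite ler_pM2r ?ltr0Sn//.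
    by rewrite lerNl; apply: le_trans (hM x); rewrite -normrN ler_norm.
  rewrite /gp mulNr; lra.
pose t := Num.truncn (gp x).
have tN : (t < K + K)%N.
  rewrite truncn_lt_nat// natrD /gp ltrD2r; apply: le_lt_trans MK.
  by rewrite ler_pM2r ?ltr0Sn//; apply: le_trans (hM x); exact: ler_norm.
have -> : \sum_(i < K + K) r i * \1_(B i) x = r t.
  rewrite -(sum_pick r tN); apply: eq_bigr => i _; congr (_ * _).
  rewrite indicE truncn_eq//; congr ((nat_of_bool _)%:R).
  by apply/idP/idP; rewrite inE /B /= in_itv /=.
have := truncn_itv gp0; rewrite -/t => /andP[t1 t2].
have -> : g x = (gp x - K%:R) / n.+1%:R by rewrite /gp addrK mulfK.
rewrite /r -mulrBl (_ : gp x - K%:R - (t%:R - K%:R) = gp x - t%:R); last by ring.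
rewrite normrM ger0_norm ?subr_ge0//.
rewrite ger0_norm ?invr_ge0// ler_pdivrMr ?ltr0Sn// mulVf ?pnatr_eq0//.
move: t2; rewrite -natr1; lra.
Qed.

End approx.

Section ssl2.
Context d (T : measurableType d) (R : realType) (P : probability T R).
Variables (Z H : T -> R) (c : R).
Hypotheses (mZ : measurable_fun setT Z) (bH : bm H).
Hypothesis hyp : forall B, measurable B ->
  Rintegral P setT (fun w => \1_B (Z w) * H w) = c * fine (P (Z @^-1` B)).

Lemma SSL (g : R -> R) : measurable_fun setT g ->
  (exists M, forall x, `|g x| <= M) ->
  Rintegral P setT (fun w => g (Z w) * H w) =
  c * Rintegral P setT (fun w => g (Z w)).
Proof.
move=> mg [M hM]; have [KH hKH] := bH.2.
apply/eqP; rewrite -subr_eq0; apply/eqP.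
apply: (@small_eq0 _ _ (KH + `|c|)) => n.
have [N [r [B [mB hB]]]] := approx_g n mg hM.
pose h x := \sum_(i < N) r i * \1_(B i) x.
have bg : bm (fun w => g (Z w)).
  by apply: (@bm_comp _ _ _ g) => //; exists M.
have bh : bm (fun w => h (Z w)) by exact: bm_simple.
have e3 : Rintegral P setT (fun w => h (Z w) * H w) =
    c * Rintegral P setT (fun w => h (Z w)).
  exact: (ssl_step mZ bH hyp).
have e1 : Rintegral P setT (fun w => g (Z w) * H w) -
          Rintegral P setT (fun w => h (Z w) * H w) =
          Rintegral P setT (fun w => (g (Z w) - h (Z w)) * H w).
  rewrite -RintegralB//; last 2 first.
  - by apply: (bm_int P); exact: bmM.
  - by apply: (bm_int P); exact: bmM.
  by apply: eq_Rintegral => w _; rewrite mulrBl.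
have e2 : Rintegral P setT (fun w => g (Z w)) -
          Rintegral P setT (fun w => h (Z w)) =
          Rintegral P setT (fun w => g (Z w) - h (Z w)).
  by rewrite -RintegralB//; exact: (bm_int P).
have bgh : bm (fun w => g (Z w) - h (Z w)).
  by apply: bmD => //; under [X in bm X]eq_fun do rewrite -mulN1r;
     apply: bmM => //; exact: bm_cst.
have -> : Rintegral P setT (fun w => g (Z w) * H w) -
    c * Rintegral P setT (fun w => g (Z w)) =
    Rintegral P setT (fun w => (g (Z w) - h (Z w)) * H w) -
    c * Rintegral P setT (fun w => g (Z w) - h (Z w)).
  by rewrite -e1 -e2 e3; ring.
apply: (le_trans (ler_normB _ _)).
rewrite mulrDl; apply: lerD.
  apply: Rint_bound; first exact: bmM.
  move=> w; rewrite normrM [X in X <= _]mulrC.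
  by apply: ler_pM.
rewrite normrM; apply: ler_wpM2l => //.
by apply: Rint_bound => // w; exact: hB.
Qed.

End ssl2.

Section prodbm.
Context d (T : measurableType d) (R : realType).

Lemma bm_prodP (I : Type) (s : seq I) (Q : pred I) (F : I -> T -> R) :
  (forall i, bm (F i)) -> bm (fun x => \prod_(i <- s | Q i) F i x).
Proof.
move=> hF; elim: s => [|i s IH].
  by under [X in bm X]eq_fun do rewrite big_nil; exact: bm_cst.
under [X in bm X]eq_fun do rewrite big_cons.
case: (Q i) => //; exact: bmM.
Qed.

Definition bmf (g : R -> R) := measurable_fun setT g /\ exists M, forall x, `|g x| <= M.

Lemma bmf_comp (g : R -> R) (Z : T -> R) : bmf g -> measurable_fun setT Z ->
  bm (fun w => g (Z w)).
Proof. by move=> [mg hg] mZ; exact: (@bm_comp _ _ _ g). Qed.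

Lemma bmf_indic (B : set R) : measurable B -> bmf (\1_B).
Proof.
move=> mB; split; first exact: measurable_indic.
by exists 1 => x; rewrite indicE; case: (x \in B); rewrite ?normr1 ?normr0.
Qed.

End prodbm.

Section ML.
Context d (T : measurableType d) (R : realType) (P : probability T R).
Variables (n : nat) (Zs : nat -> T -> R).
Hypotheses (indep : mutually_independent P n Zs)
  (mZs : forall i, measurable_fun setT (Zs i)).

Definition MLHS (f : nat -> R -> R) :=
  Rintegral P setT (fun w => \prod_(i < n) f i (Zs i w)).
Definition MRHS (f : nat -> R -> R) :=
  \prod_(i < n) Rintegral P setT (fun w => f i (Zs i w)).

Definition Inv m (f : nat -> R -> R) :=
  (forall j, (j < m)%N -> bmf (f j)) /\ exists B : nat -> set R,
    (forall i, measurable (B i)) /\ forall j, (m <= j)%N -> f j = \1_(B j).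

Lemma Inv_bmf m f : Inv m f -> forall j, bmf (f j).
Proof.
move=> [h1 [B [mB h2]]] j; case: (ltnP j m) => jm; first exact: h1.
by rewrite h2//; exact: bmf_indic.
Qed.

Lemma ML_base f : Inv 0 f -> MLHS f = MRHS f.
Proof.
move=> [_ [B [mB hB]]].
pose S := \bigcap_(i in [set k | (k < n)%N]) (Zs i @^-1` B i).
have mS : measurable S.
  apply: bigcap_measurableType => k _; rewrite -[_ @^-1` _]setTI.
  exact: mZs.
have e : forall w, \prod_(i < n) f i (Zs i w) = \1_S w.
  move=> w; case: (pselect (forall i, (i < n)%N -> B i (Zs i w))) => hw.
    rewrite indicE mem_set//; apply: big1 => i _.
    by rewrite hB// indicE mem_set//; exact: hw.
  have [i] : exists i, ~ ((i < n)%N -> B i (Zs i w)) by apply/existsNP.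
  move=> /not_implyP[ilt nB].
  rewrite indicE memNset; last by move=> /(_ i ilt).
  rewrite (bigD1 (Ordinal ilt)) //= hB// indicE memNset// mul0r.
  by [].
rewrite /MLHS; under eq_Rintegral do rewrite e.
rewrite Rint_indic// /MRHS.
have -> : P S = (\prod_(i < n) P (Zs i @^-1` B i))%E by exact: indep.
have fin i : P (Zs i @^-1` B i) \is a fin_num.
  by rewrite fin_num_measure// -[_ @^-1` _]setTI; exact: mZs.
under eq_bigr => i _ do rewrite -(fineK (fin i)).
rewrite prodEFin /=; apply: eq_bigr => i _.
by rewrite hB// Rint_indicZ.
Qed.

Lemma ML_step m : (m < n)%N -> (forall f, Inv m f -> MLHS f = MRHS f) ->
  forall f, Inv m.+1 f -> MLHS f = MRHS f.
Proof.
move=> mn IH f hf.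
have bf := Inv_bmf hf.
pose i0 := Ordinal mn.
have oth (g g' : nat -> R -> R) : (forall j, j != m -> g' j = g j) ->
    forall i : 'I_n, i != i0 -> g' i = g i.
  move=> hg i ne; apply: hg; apply: contra ne => /eqP e; apply/eqP.
  exact: val_inj.
have spl (g : nat -> R -> R) w : \prod_(i < n) g i (Zs i w) =
    g m (Zs m w) * \prod_(i < n | i != i0) g i (Zs i w).
  by rewrite (bigD1 i0).
have splR (g : nat -> R -> R) : \prod_(i < n) Rintegral P setT (fun w => g i (Zs i w)) =
    Rintegral P setT (fun w => g m (Zs m w)) *
    \prod_(i < n | i != i0) Rintegral P setT (fun w => g i (Zs i w)).
  by rewrite (bigD1 i0).
pose H w := \prod_(i < n | i != i0) f i (Zs i w).
pose c := \prod_(i < n | i != i0) Rintegral P setT (fun w => f i (Zs i w)).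
have bH : bm H.
  by apply: bm_prodP => i; apply: bmf_comp.
have hyp : forall B, measurable B ->
    Rintegral P setT (fun w => \1_B (Zs m w) * H w) = c * fine (P (Zs m @^-1` B)).
  move=> B mB.
  pose f' j := if j == m then \1_B else f j.
  have hf' : Inv m f'.
    case: hf => [h1 [Bf [mBf h2]]]; split.
      by move=> j jm; rewrite /f' (ltn_eqF jm); apply: h1; exact: ltnW.
    exists (fun j => if j == m then B else Bf j); split.
      by move=> i; case: ifP.
    move=> j jm; rewrite /f'; case: eqP => // /eqP jnm; apply: h2.
    by rewrite ltn_neqAle eq_sym jnm.
  have oth' := oth f f' (fun j (ne : j != m) => ifN _ _ ne).
  have eL : MLHS f' = Rintegral P setT (fun w => \1_B (Zs m w) * H w).
    rewrite /MLHS; apply: eq_Rintegral => w _ /=; rewrite (spl f'); congr (_ * _).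
      by rewrite /f' eqxx.
    by apply: eq_bigr => i ne; rewrite oth'.
  have eR : MRHS f' = Rintegral P setT (fun w => \1_B (Zs m w)) * c.
    rewrite /MRHS (splR f'); congr (_ * _).
      by rewrite /f' eqxx.
    by apply: eq_bigr => i ne; rewrite oth'.
  have := IH f' hf'; rewrite eL eR => ->.
  by rewrite Rint_indicZ// mulrC.
have hS := SSL (mZs m) bH hyp (bf m).1 (bf m).2.
rewrite /MLHS /MRHS (splR f).
transitivity (Rintegral P setT (fun w => f m (Zs m w) * H w)).
  by apply: eq_Rintegral => w _ /=; rewrite (spl f).
by rewrite hS mulrC.
Qed.

Lemma ML_ind m : (m <= n)%N -> forall f, Inv m f -> MLHS f = MRHS f.
Proof.
elim: m => [_|m IH mn]; first exact: ML_base.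
by apply: ML_step => //; apply: IH; exact: ltnW.
Qed.

Lemma ML (f : nat -> R -> R) : (forall j, bmf (f j)) -> MLHS f = MRHS f.
Proof.
move=> hf.
pose f' j := if (j < n)%N then f j else \1_setT.
have e : MLHS f = MLHS f' /\ MRHS f = MRHS f'.
  split; [apply: eq_Rintegral => w _|]; apply: eq_bigr => i _;
    by rewrite /f' ltn_ord.
rewrite e.1 e.2; apply: (@ML_ind n) => //; split.
  by move=> j jn; rewrite /f' jn.
exists (fun=> setT); split => // j nj.
by rewrite /f' ltnNge nj.
Qed.

End ML.

Section trig.
Context (R : realType).

Lemma norm_cos (x : R) : `|cos x| <= 1.
Proof. by rewrite ler_norml cos_geN1 cos_le1. Qed.
Lemma norm_sin (x : R) : `|sin x| <= 1.
Proof. by rewrite ler_norml sin_geN1 sin_le1. Qed.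

Lemma measurable_cosc (c : R) : measurable_fun setT (fun y : R => cos (c * y)).
Proof.
apply: continuous_measurable_fun => y.
apply: continuous_comp; last exact: continuous_cos.
by apply: cvgMr; exact: cvg_id.
Qed.
Lemma measurable_sinc (c : R) : measurable_fun setT (fun y : R => sin (c * y)).
Proof.
apply: continuous_measurable_fun => y.
apply: continuous_comp; last exact: continuous_sin.
by apply: cvgMr; exact: cvg_id.
Qed.

Lemma bmf_cos (c : R) : bmf (fun y => cos (c * y)).
Proof. by split; [exact: measurable_cosc| exists 1 => x; exact: norm_cos]. Qed.
Lemma bmf_sin (c : R) : bmf (fun y => sin (c * y)).
Proof. by split; [exact: measurable_sinc| exists 1 => x; exact: norm_sin]. Qed.

End trig.

Section GL.
Context d (T : measurableType d) (R : realType) (P : probability T R).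
Variables (n : nat) (L : nat -> T -> R) (wt : nat -> R) (th : R).
Hypotheses (indep : mutually_independent P n L)
  (mL : forall i, measurable_fun setT (L i)).

Definition Sm m w := \sum_(j < m) wt j * L j w.
Definition Ec j := Rintegral P setT (fun w => cos (th * wt j * L j w)).
Definition Es j := Rintegral P setT (fun w => sin (th * wt j * L j w)).
Fixpoint AB m : R * R := if m is m'.+1 then
  ((AB m').1 * Ec m' - (AB m').2 * Es m', (AB m').1 * Es m' + (AB m').2 * Ec m')
  else (1, 0).

Lemma mSm m : measurable_fun setT (Sm m).
Proof.
apply: measurable_sum => j; apply: measurable_funM => //.
Qed.

Lemma bm_cosS m : bm (fun w => cos (th * Sm m w)).
Proof. exact: (bmf_comp (bmf_cos th) (mSm m)). Qed.
Lemma bm_sinS m : bm (fun w => sin (th * Sm m w)).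
Proof. exact: (bmf_comp (bmf_sin th) (mSm m)). Qed.

Lemma bm_Pi m (f : nat -> R -> R) : (forall j, bmf (f j)) ->
  bm (fun w => \prod_(m <= j < n) f j (L j w)).
Proof. by move=> hf; apply: bm_prod => j; exact: bmf_comp. Qed.

Lemma Claim m : (m <= n)%N -> forall f : nat -> R -> R, (forall j, bmf (f j)) ->
  Rintegral P setT (fun w => cos (th * Sm m w) * \prod_(m <= j < n) f j (L j w))
  = (AB m).1 * \prod_(m <= j < n) Rintegral P setT (fun w => f j (L j w)) /\
  Rintegral P setT (fun w => sin (th * Sm m w) * \prod_(m <= j < n) f j (L j w))
  = (AB m).2 * \prod_(m <= j < n) Rintegral P setT (fun w => f j (L j w)).
Proof.
elim: m => [_ f hf|m IH mn f hf].
  have S0 w : Sm 0 w = 0 by rewrite /Sm big_ord0.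
  split.
    under eq_Rintegral do rewrite S0 mulr0 cos0 mul1r big_mkord.
    by rewrite /= mul1r big_mkord; exact: (ML indep mL).
  under eq_Rintegral do rewrite S0 mulr0 sin0 mul0r.
  by rewrite Rint_cst0 /= mul0r.
have mn' : (m < n)%N by [].
have key (g : R -> R) : bmf g ->
  Rintegral P setT (fun w => cos (th * Sm m w) *
      (g (L m w) * \prod_(m.+1 <= j < n) f j (L j w))) =
    (AB m).1 * (Rintegral P setT (fun w => g (L m w)) *
      \prod_(m.+1 <= j < n) Rintegral P setT (fun w => f j (L j w))) /\
  Rintegral P setT (fun w => sin (th * Sm m w) *
      (g (L m w) * \prod_(m.+1 <= j < n) f j (L j w))) =
    (AB m).2 * (Rintegral P setT (fun w => g (L m w)) *
      \prod_(m.+1 <= j < n) Rintegral P setT (fun w => f j (L j w))).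
  move=> bg.
  pose f1 j := if j == m then g else f j.
  have hf1 j : bmf (f1 j) by rewrite /f1; case: ifP.
  have e1 w : \prod_(m <= j < n) f1 j (L j w) =
      g (L m w) * \prod_(m.+1 <= j < n) f j (L j w).
    rewrite big_ltn// /f1 eqxx; congr (_ * _); apply: eq_big_nat => j /andP[jm _].
    by rewrite gtn_eqF.
  have e2 : \prod_(m <= j < n) Rintegral P setT (fun w => f1 j (L j w)) =
      Rintegral P setT (fun w => g (L m w)) *
      \prod_(m.+1 <= j < n) Rintegral P setT (fun w => f j (L j w)).
    rewrite big_ltn// /f1 eqxx; congr (_ * _); apply: eq_big_nat => j /andP[jm _].
    by rewrite gtn_eqF.
  have [c1 s1] := IH (ltnW mn) f1 hf1.
  rewrite -e2 -c1 -s1.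
  by split; apply: eq_Rintegral => w _; rewrite e1.
have [kc1 ks1] := key _ (bmf_cos (th * wt m)).
have [kc2 ks2] := key _ (bmf_sin (th * wt m)).
have SS w : th * Sm m.+1 w = th * Sm m w + th * wt m * L m w.
  by rewrite /Sm big_ord_recr /= mulrDr mulrA.
have bP : bm (fun w => \prod_(m.+1 <= j < n) f j (L j w)) by exact: bm_Pi.
have bc : bm (fun w => cos (th * wt m * L m w)).
  exact: (bmf_comp (bmf_cos (th * wt m)) (mL m)).
have bs : bm (fun w => sin (th * wt m * L m w)).
  exact: (bmf_comp (bmf_sin (th * wt m)) (mL m)).
split.
  transitivity (Rintegral P setT (fun w => cos (th * Sm m w) *
      (cos (th * wt m * L m w) * \prod_(m.+1 <= j < n) f j (L j w)) -
      sin (th * Sm m w) *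
      (sin (th * wt m * L m w) * \prod_(m.+1 <= j < n) f j (L j w)))).
    by apply: eq_Rintegral => w _; rewrite SS cosD; ring.
  rewrite RintegralB//; last 2 first.
  - by apply: (bm_int P); apply: bmM; [exact: bm_cosS| exact: bmM].
  - by apply: (bm_int P); apply: bmM; [exact: bm_sinS| exact: bmM].
  rewrite kc1 ks2 /= /Ec /Es; ring.
transitivity (Rintegral P setT (fun w => sin (th * Sm m w) *
    (cos (th * wt m * L m w) * \prod_(m.+1 <= j < n) f j (L j w)) +
    cos (th * Sm m w) *
    (sin (th * wt m * L m w) * \prod_(m.+1 <= j < n) f j (L j w)))).
  by apply: eq_Rintegral => w _; rewrite SS sinD; ring.
rewrite RintegralD//; last 2 first.
- by apply: (bm_int P); apply: bmM; [exact: bm_sinS| exact: bmM].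
- by apply: (bm_int P); apply: bmM; [exact: bm_cosS| exact: bmM].
rewrite ks1 kc2 /= /Ec /Es; ring.
Qed.

End GL.

Section GLfin.
Context d (T : measurableType d) (R : realType) (P : probability T R).
Variables (n : nat) (L : nat -> T -> R) (wt : nat -> R) (al be sg mu : R).
Hypotheses (indep : mutually_independent P n L)
  (mL : forall i, measurable_fun setT (L i))
  (hst : forall j, (j < n)%N -> stable_law P (L j) al be sg mu).

Let re x := stable_cf_re al be sg mu x.
Let im x := stable_cf_im_arg al be sg mu x.

Lemma Ec_eq th j : (j < n)%N -> Ec P L wt th j = re (th * wt j) * cos (im (th * wt j)).
Proof.
move=> jn; have [_ _ _ _ hcf] := hst jn; have [hc _] := hcf (th * wt j).
rewrite expectE in hc; last exact: (bmf_comp (bmf_cos _) (mL j)).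
by move: hc => [].
Qed.

Lemma Es_eq th j : (j < n)%N -> Es P L wt th j = re (th * wt j) * sin (im (th * wt j)).
Proof.
move=> jn; have [_ _ _ _ hcf] := hst jn; have [_ hs] := hcf (th * wt j).
rewrite expectE in hs; last exact: (bmf_comp (bmf_sin _) (mL j)).
by move: hs => [].
Qed.

Lemma AB_closed th m : (m <= n)%N ->
  AB P L wt th m = (\prod_(j < m) re (th * wt j) * cos (\sum_(j < m) im (th * wt j)),
                    \prod_(j < m) re (th * wt j) * sin (\sum_(j < m) im (th * wt j))).
Proof.
elim: m => [_|m IH mn]; first by rewrite !big_ord0 cos0 sin0 mulr1 mulr0.
rewrite /= IH ?(ltnW mn)//= Ec_eq// Es_eq//.
rewrite !big_ord_recr /= cosD sinD; congr (_, _); ring.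
Qed.

End GLfin.

Section GLstable.
Context d (T : measurableType d) (R : realType) (P : probability T R).
Variables (n : nat) (L : nat -> T -> R) (wt : nat -> R) (al be sg mu c0 : R).
Hypotheses (indep : mutually_independent P n L)
  (mL : forall i, measurable_fun setT (L i))
  (hst : forall j, (j < n)%N -> stable_law P (L j) al be sg mu)
  (n0 : (0 < n)%N) (hal : 0 < al <= 2) (hbe : -1 <= be <= 1) (hsg : 0 < sg)
  (al1 : al != 1) (wt0 : forall j, 0 < wt j).

Let W := \sum_(j < n) wt j `^ al.
Let sg' := sg * W `^ al^-1.

Lemma W_gt0 : 0 < W.
Proof.
rewrite /W; case: n n0 => // n' _; rewrite big_ord_recl.
by apply: ltr_pwDl; [exact: powR_gt0|apply: sumr_ge0 => i _; exact: powR_ge0].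
Qed.

Lemma pow_key th : \sum_(j < n) `|sg * (th * wt j)| `^ al = `|sg' * th| `^ al.
Proof.
have al0 : al != 0 by case/andP: hal => /gt_eqF ->.
have Wp : 0 < W `^ al^-1 by rewrite powR_gt0// W_gt0.
have e1 j : `|sg * (th * wt j)| = (sg * `|th|) * wt j.
  by rewrite !normrM (gtr0_norm hsg) (gtr0_norm (wt0 j)) mulrA.
have e2 : `|sg' * th| = (sg * `|th|) * W `^ al^-1.
  by rewrite /sg' !normrM (gtr0_norm hsg) (gtr0_norm Wp); ring.
under eq_bigr => j _ do rewrite e1 powRM ?mulr_ge0 ?normr_ge0 ?(ltW hsg) ?(ltW (wt0 j))//.
rewrite -mulr_sumr -/W e2 powRM ?mulr_ge0 ?normr_ge0 ?(ltW hsg) ?powR_ge0//.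
rewrite [RHS]powRM ?mulr_ge0 ?powR_ge0 ?normr_ge0 ?(ltW hsg)//.
rewrite [X in _ = X * _]powRM ?normr_ge0 ?(ltW hsg)//.
by rewrite -powRrM mulVf// powRr1// ltW// W_gt0.
Qed.

Lemma GL_stable :
  stable_law P (fun w => c0 + \sum_(j < n) wt j * L j w) al be sg'
    (c0 + mu * \sum_(j < n) wt j).
Proof.
have al0 : al != 0 by case/andP: hal => /gt_eqF ->.
split => //.
- by rewrite /sg' mulr_gt0// powR_gt0// W_gt0.
- by apply: measurable_funD => //; exact: (mSm wt mL n).
move=> th.
pose f := fun (_ : nat) (_ : R) => (1 : R).
have hf j : bmf (f j) by split; [exact: measurable_cst| exists 1 => x; rewrite normr1].
have [c1' s1'] := Claim wt th indep mL (leqnn n) hf.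
have c1 : Rintegral P setT (fun w => cos (th * Sm L wt n w)) = (AB P L wt th n).1.
  rewrite big_geq// mulr1 in c1'; rewrite -c1'; apply: eq_Rintegral => w _.
  by rewrite big_geq// mulr1.
have s1 : Rintegral P setT (fun w => sin (th * Sm L wt n w)) = (AB P L wt th n).2.
  rewrite big_geq// mulr1 in s1'; rewrite -s1'; apply: eq_Rintegral => w _.
  by rewrite big_geq// mulr1.
rewrite (AB_closed wt mL hst) // /= in c1 s1.
have bc : bm (fun w => cos (th * Sm L wt n w)) by exact: bm_cosS.
have bs : bm (fun w => sin (th * Sm L wt n w)) by exact: bm_sinS.
set Pr := \prod_(j < n) _ in c1 s1.
set Ph := \sum_(j < n) _ in c1 s1.
have ePr : Pr = stable_cf_re al be sg' (c0 + mu * \sum_(j < n) wt j) th.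
  rewrite /Pr /stable_cf_re !al1 -expR_sum; congr expR.
  by rewrite sumrN pow_key.
have ePh : th * c0 + Ph = stable_cf_im_arg al be sg' (c0 + mu * \sum_(j < n) wt j) th.
  rewrite /Ph /stable_cf_im_arg al1 -pow_key /=.
  rewrite mulr_suml mulr_suml mulr_suml !mulrDr !mulr_sumr -addrA -big_split /=.
  congr (_ + _); apply: eq_bigr => j _; rewrite sgrM (gtr0_sg (wt0 j)); ring.
split.
  rewrite expectE; last first.
    exact: (bmf_comp (bmf_cos th) (measurable_funD (measurable_cst c0) (mSm wt mL n))).
  congr EFin.
  transitivity (Rintegral P setT (fun w => cos (th * c0) * cos (th * Sm L wt n w) -
      sin (th * c0) * sin (th * Sm L wt n w))).
    by apply: eq_Rintegral => w _; rewrite mulrDr cosD.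
  rewrite RintegralB//; [|apply: (bm_int P)..]; last 2 first.
  - by apply: bmM => //; exact: bm_cst.
  - by apply: bmM => //; exact: bm_cst.
  rewrite !RintegralZl//; [|exact: (bm_int P)..].
  by rewrite c1 s1 -ePr -ePh cosD; ring.
rewrite expectE; last first.
  exact: (bmf_comp (bmf_sin th) (measurable_funD (measurable_cst c0) (mSm wt mL n))).
congr EFin.
transitivity (Rintegral P setT (fun w => sin (th * c0) * cos (th * Sm L wt n w) +
    cos (th * c0) * sin (th * Sm L wt n w))).
  by apply: eq_Rintegral => w _; rewrite mulrDr sinD.
rewrite RintegralD//; [|apply: (bm_int P)..]; last 2 first.
- by apply: bmM => //; exact: bm_cst.
- by apply: bmM => //; exact: bm_cst.
rewrite !RintegralZl//; [|exact: (bm_int P)..].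
by rewrite c1 s1 -ePr -ePh sinD; ring.
Qed.

End GLstable.

Section arith.
Context (R : realType) (mu : R).
Hypothesis mu0 : mu != 0.

Definition q (i : nat) : R := expR (mu * i%:R).
Definition wk k j := 1 - (q (k - j.+1) - 1) / (q k - 1).
Definition muk k := mu + ln ((q k - 1) / (expR mu - 1)).
Definition ck k := muk k - mu * \sum_(j < k) wk k j.

Lemma q0 : q 0 = 1. Proof. by rewrite /q mulr0 expR0. Qed.
Lemma qS i : q i.+1 = expR mu * q i.
Proof. by rewrite /q -addn1 natrD mulrDr mulr1 expRD mulrC. Qed.
Lemma q_gt0 i : 0 < q i. Proof. exact: expR_gt0. Qed.

Lemma pos_div (x y : R) : 0 < x * y -> 0 < x / y.
Proof.
move=> h; have y0 : y != 0 by apply: contraTneq h => ->; rewrite mulr0 ltxx.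
have -> : x / y = (x * y) / (y * y) by rewrite invfM mulrA mulfK.
by rewrite divr_gt0// lt_neqAle eq_sym mulf_neq0//= -expr2 sqr_ge0.
Qed.

Lemma q_lt (i j : nat) : (i < j)%N -> 0 < (q j - q i) * mu.
Proof.
move=> ij; have ij' : (i%:R : R) < j%:R by rewrite ltr_nat.
have [m0|m0|m0] := ltgtP mu 0; last by move: mu0; rewrite m0 eqxx.
  have hm : mu * j%:R < mu * i%:R by nra.
  have : q j < q i by rewrite /q ltr_expR.
  by move=> h; nra.
have hm : mu * i%:R < mu * j%:R by nra.
have : q i < q j by rewrite /q ltr_expR.
by move=> h; nra.
Qed.

Lemma qm1_mu i : (0 < i)%N -> 0 < (q i - 1) * mu.
Proof. by move=> i0; have := q_lt i0; rewrite q0. Qed.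

Lemma qm1_neq0 i : (0 < i)%N -> q i - 1 != 0.
Proof. by move=> i0; apply: contraTneq (qm1_mu i0) => ->; rewrite mul0r ltxx. Qed.

Lemma E1 : expR mu - 1 != 0.
Proof. by have := qm1_neq0 (ltn0Sn 0); rewrite /q mulr1. Qed.

Lemma ratio_gt0 k : (0 < k)%N -> 0 < (q k - 1) / (expR mu - 1).
Proof.
move=> k0; apply: pos_div.
have h1 := qm1_mu k0; have h2 := qm1_mu (ltn0Sn 0); rewrite /q mulr1 in h2.
have [m0|m0|m0] := ltgtP mu 0; last by move: mu0; rewrite m0 eqxx.
  have a : q k - 1 < 0 by rewrite -(nmulr_rgt0 _ m0) mulrC.
  have b : expR mu - 1 < 0 by rewrite -(nmulr_rgt0 _ m0) mulrC.
  by nra.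
have a : 0 < q k - 1 by rewrite -(pmulr_lgt0 _ m0).
have b : 0 < expR mu - 1 by rewrite -(pmulr_lgt0 _ m0).
by nra.
Qed.

Lemma wk_gt0 k j : (0 < k)%N -> 0 < wk k j.
Proof.
move=> k0; rewrite /wk.
case: (ltnP j k) => jk; last first.
  by rewrite (_ : k - j.+1 = 0)%N ?q0 ?subrr ?mul0r ?subr0 ?ltr01//; apply/eqP; rewrite subn_eq0 ltnW.
have i_lt : (k - j.+1 < k)%N by rewrite ltn_subrL k0.
have h1 := q_lt i_lt; have h2 := qm1_mu k0.
have -> : 1 - (q (k - j.+1) - 1) / (q k - 1) = (q k - q (k - j.+1)) / (q k - 1).
  by field; exact: qm1_neq0.
apply: pos_div.
have [m0|m0|m0] := ltgtP mu 0; last by move: mu0; rewrite m0 eqxx.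
  have a : q k - q (k - j.+1) < 0 by rewrite -(nmulr_rgt0 _ m0) mulrC.
  have b : q k - 1 < 0 by rewrite -(nmulr_rgt0 _ m0) mulrC.
  by nra.
have a : 0 < q k - q (k - j.+1) by rewrite -(pmulr_lgt0 _ m0).
have b : 0 < q k - 1 by rewrite -(pmulr_lgt0 _ m0).
by nra.
Qed.

Lemma expR_muk k : (0 < k)%N ->
  expR (muk k) = expR mu * ((q k - 1) / (expR mu - 1)).
Proof. by move=> k0; rewrite /muk expRD lnK// posrE ratio_gt0. Qed.

Lemma a_succ k : (0 < k)%N ->
  expR (muk k) + 1 = (q k.+1 - 1) / (expR mu - 1).
Proof.
move=> k0; rewrite expR_muk// qS; field; exact: E1.
Qed.

Lemma ln_a1 k : (0 < k)%N -> ln (expR (muk k) + 1) = muk k.+1 - mu.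
Proof. by move=> k0; rewrite a_succ// [muk k.+1]/muk; ring. Qed.

Lemma bk_wk k j : (0 < k)%N -> (j < k)%N ->
  expR (muk k) / (expR (muk k) + 1) * wk k j = wk k.+1 j.
Proof.
move=> k0 jk; rewrite a_succ// expR_muk// /wk subSS -(subnSK jk) !qS.
have h1 := qm1_neq0 k0; have h2 := qm1_neq0 (ltn0Sn k); rewrite qS in h2.
have h3 := E1.
by field; rewrite h1 h2 h3.
Qed.

Lemma wk_last k : wk k.+1 k = 1.
Proof. by rewrite /wk subnn q0 subrr mul0r subr0. Qed.

Lemma sig_sum k al : (0 < k)%N ->
  \sum_(j < k) wk k j `^ al =
  1 + \sum_(1 <= j < k) (1 - (q j - 1) / (q k - 1)) `^ al.
Proof.
move=> k0.
transitivity (\sum_(0 <= i < k) (1 - (q i - 1) / (q k - 1)) `^ al).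
  by rewrite big_rev_mkord subn0.
by rewrite big_ltn// q0 subrr mul0r subr0 powR1.
Qed.

End arith.

Section young.
Context (R : realType).

Lemma young1 (a z : R) : 0 < a -> 0 < z ->
  (a + 1) * (z / a) `^ (a / (a + 1)) <= z + 1.
Proof.
move=> a0 z0.
have a10 : 0 < a + 1 by lra.
have za0 : 0 <= z / a by rewrite divr_ge0// ltW.
have := @conjugate_powR R ((z / a) `^ (a / (a + 1))) 1 ((a + 1) / a) (a + 1)
  (powR_ge0 _ _) ler01 (divr_gt0 a10 a0) a10.
rewrite invf_div (_ : a / (a + 1) + (a + 1)^-1 = 1); last first.
  by field; rewrite gt_eqF.
move=> /(_ erefl); rewrite mulr1 powR1 -powRrM.
rewrite (_ : a / (a + 1) * ((a + 1) / a) = 1); last first.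
  by field; rewrite !gt_eqF.
rewrite powRr1// => h.
rewrite -ler_pdivlMl//; apply: (le_trans h).
rewrite le_eqVlt; apply/orP; left; apply/eqP; field.
by rewrite !gt_eqF.
Qed.

End young.

Section main.
Context d (T : measurableType d) (R : realType) (P : probability T R)
  (X : R -> T -> R) (alpha beta sigma mu : R) (a : nat -> R).
Hypotheses (hal : 0 < alpha <= 2) (hbe : -1 <= beta <= 1) (hsg : 0 < sigma)
  (hX : stable_wealth_process P X alpha beta sigma mu)
  (al1 : alpha != 1) (mu0 : mu != 0)
  (apos : forall k, (1 <= k)%N -> 0 < a k)
  (ahyp : forall k, (1 <= k)%N -> forall s m,
     stable_law P (fun w => ln (Zlow X (fun j => j%:R) (fun _ => 1) a k w))
       alpha beta s m -> a k = expR m).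

Let tt := fun j : nat => (j%:R : R).
Let cc := fun _ : nat => (1 : R).
Definition Lt j w := ln (X j.+1%:R w) - ln (X j%:R w).

Lemma Xpos (j : nat) w : 0 < X j%:R w.
Proof. by case: hX => h _ _ _ _; exact: (h _ (ler0n _ j)).2. Qed.

Lemma mX (j : nat) : measurable_fun setT (X j%:R).
Proof. by case: hX => h _ _ _ _; exact: (h _ (ler0n _ j)).1. Qed.

Lemma mL j : measurable_fun setT (Lt j).
Proof.
by apply: measurable_funB; apply: measurableT_comp; [exact: measurable_ln|exact: mX|
  exact: measurable_ln|exact: mX].
Qed.

Lemma indepL k : mutually_independent P k Lt.
Proof.
case: hX => _ _ _ h _; apply: (h k (fun i => i%:R)) => //.
by move=> i _; rewrite ltr_nat.
Qed.

Lemma ln_div (x y : R) : 0 < x -> 0 < y -> ln (x / y) = ln x - ln y.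
Proof.
by move=> x0 y0; rewrite lnM ?posrE ?invr_gt0// lnV// posrE.
Qed.

Lemma stL j : stable_law P (Lt j) alpha beta sigma mu.
Proof.
case: hX => _ _ _ _ h.
have := h j%:R j.+1%:R (ler0n _ j); rewrite ltr_nat => /(_ (ltnSn j)).
have e : (j.+1%:R - j%:R : R) = 1 by rewrite mulrSr addrAC subrr add0r.
rewrite e powR1 mulr1 mulr1.
have -> : (fun w => ln (X j.+1%:R w / X j%:R w)) = Lt j.
  by apply: funext => w; rewrite ln_div// Xpos.
by [].
Qed.

Definition Rep k := forall w, 0 < Zlow X tt cc a k.+1 w /\
  ln (Zlow X tt cc a k.+1 w) = ck mu k.+1 + \sum_(j < k.+1) wk mu k.+1 j * Lt j w.

Lemma stable_of_Rep k : Rep k ->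
  stable_law P (fun w => ln (Zlow X tt cc a k.+1 w)) alpha beta
    (sigma * (\sum_(j < k.+1) wk mu k.+1 j `^ alpha) `^ alpha^-1) (muk mu k.+1).
Proof.
move=> hR.
have -> : (fun w => ln (Zlow X tt cc a k.+1 w)) =
    (fun w => ck mu k.+1 + \sum_(j < k.+1) wk mu k.+1 j * Lt j w).
  by apply: funext => w; exact: (hR w).2.
have := @GL_stable _ _ _ P k.+1 Lt (wk mu k.+1) alpha beta sigma mu (ck mu k.+1)
  (indepL k.+1) mL (fun j _ => stL j) (ltn0Sn k) hal hbe hsg al1
  (fun j => wk_gt0 mu0 j (ltn0Sn k)).
by rewrite /ck subrK.
Qed.

Lemma a_eq k : Rep k -> a k.+1 = expR (muk mu k.+1).
Proof. by move=> hR; apply: (ahyp (ltn0Sn k)); exact: stable_of_Rep. Qed.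

Lemma Rep_all k : Rep k.
Proof.
elim: k => [|k IH] w.
  have gp : 0 < X 1%:R w / X 0%:R w by rewrite divr_gt0// Xpos.
  have -> : Zlow X tt cc a 1 w = X 1%:R w / X 0%:R w * (0 + 1) by [].
  rewrite add0r mulr1; split => //.
  rewrite big_ord1 ln_div ?Xpos// /ck big_ord1 wk_last mul1r mulr1.
  rewrite /muk /q mulr1 divff ?E1// ln1 addr0 subrr add0r.
  by [].
have aE := a_eq IH.
have [Zp lnZ] := IH w.
set A := expR (muk mu k.+1) in aE.
have A0 : 0 < A by exact: expR_gt0.
have -> : Zlow X tt cc a k.+2 w =
   X k.+2%:R w / X k.+1%:R w * (a k.+1 + 1) *
   (Zlow X tt cc a k.+1 w / a k.+1) `^ (a k.+1 / (a k.+1 + 1)) by [].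
rewrite aE.
have gp : 0 < X k.+2%:R w / X k.+1%:R w by rewrite divr_gt0// Xpos.
have ZA : 0 < Zlow X tt cc a k.+1 w / A by rewrite divr_gt0.
have A10 : 0 < A + 1 by lra.
split; first by apply: mulr_gt0; [exact: mulr_gt0|exact: powR_gt0].
rewrite lnM ?posrE; [|by rewrite mulr_gt0|by rewrite powR_gt0].
rewrite lnM ?posrE // ln_powR (ln_div (Xpos _ _) (Xpos _ _)) (ln_div Zp A0).
rewrite /A ln_a1// expRK lnZ.
have s1 : \sum_(j < k.+2) wk mu k.+2 j * Lt j w =
    expR (muk mu k.+1) / (expR (muk mu k.+1) + 1) *
    \sum_(j < k.+1) wk mu k.+1 j * Lt j w + Lt k.+1 w.
  rewrite big_ord_recr /= wk_last mul1r mulr_sumr; congr (_ + _).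
  apply: eq_bigr => j _.
  by rewrite -(bk_wk mu0 (ltn0Sn k) (ltn_ord j)) mulrA.
have s0 : \sum_(j < k.+2) wk mu k.+2 j =
    expR (muk mu k.+1) / (expR (muk mu k.+1) + 1) *
    \sum_(j < k.+1) wk mu k.+1 j + 1.
  rewrite big_ord_recr /= wk_last mulr_sumr; congr (_ + _).
  apply: eq_bigr => j _.
  by rewrite -(bk_wk mu0 (ltn0Sn k) (ltn_ord j)).
rewrite /ck s0 s1 /Lt; ring.
Qed.

Lemma ZY k : forall w, 0 < Zlow X tt cc a k.+1 w <= Ywealth X tt cc k.+1 w.
Proof.
elim: k => [|k IH] w.
  have -> : Zlow X tt cc a 1 w = Ywealth X tt cc 1 w by [].
  have -> : Ywealth X tt cc 1 w = X 1%:R w / X 0%:R w * (0 + 1) by [].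
  by rewrite lexx andbT add0r mulr1 divr_gt0// Xpos.
have [Zp ZY1] := andP (IH w).
have A0 : 0 < a k.+1 by exact: apos.
have gp : 0 < X k.+2%:R w / X k.+1%:R w by rewrite divr_gt0// Xpos.
have -> : Zlow X tt cc a k.+2 w =
   X k.+2%:R w / X k.+1%:R w * ((a k.+1 + 1) *
   (Zlow X tt cc a k.+1 w / a k.+1) `^ (a k.+1 / (a k.+1 + 1))).
  by rewrite mulrA.
have -> : Ywealth X tt cc k.+2 w =
   X k.+2%:R w / X k.+1%:R w * (Ywealth X tt cc k.+1 w + 1) by [].
apply/andP; split.
  by rewrite mulr_gt0// mulr_gt0 ?powR_gt0 ?divr_gt0//; lra.
rewrite ler_pM2l//; apply: (le_trans (young1 A0 Zp)); lra.
Qed.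

Lemma final k : (1 <= k)%N ->
    let Y := Ywealth X (fun j => j%:R) (fun _ => 1) k in
    let Z := Zlow X (fun j => j%:R) (fun _ => 1) a k in
    let mu_k := mu + ln ((expR (mu * k%:R) - 1) / (expR mu - 1)) in
    let sigma_k := (sigma `^ alpha *
        (1 + \sum_(1 <= j < k)
               (1 - (expR (mu * j%:R) - 1) / (expR (mu * k%:R) - 1)) `^ alpha))
        `^ alpha^-1 in
    (\forall w \ae P, Z w <= Y w) /\
    stable_law P (fun w => ln (Z w)) alpha beta sigma_k mu_k.
Proof.
case: k => // k _ Y Z mu_k sigma_k; split.
  by apply: aeW => w; have /andP[] := ZY k w.
have := stable_of_Rep (Rep_all k).
have -> : sigma * (\sum_(j < k.+1) wk mu k.+1 j `^ alpha) `^ alpha^-1 = sigma_k.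
  rewrite /sigma_k (sig_sum mu _ (ltn0Sn k)).
  have al0 : alpha != 0 by case/andP: hal => /gt_eqF ->.
  rewrite [RHS]powRM ?powR_ge0//; last first.
    by apply: addr_ge0 => //; apply: sumr_ge0 => j _; exact: powR_ge0.
  by rewrite -powRrM mulfV// powRr1 ?ltW.
by [].
Qed.

End main.

Unset Implicit Arguments.
Set Strict Implicit.

Theorem theorem2 (d : measure_display) (T : measurableType d) (R : realType)
  (P : probability T R) (X : R -> T -> R) (alpha beta sigma mu : R)
  (a : nat -> R) :
  0 < alpha <= 2 -> -1 <= beta <= 1 -> 0 < sigma ->
  stable_wealth_process P X alpha beta sigma mu ->
  alpha != 1 -> mu != 0 ->
  (forall k, (1 <= k)%N -> 0 < a k) ->
  (* a_k = exp(mu_k), mu_k the location parameter of log Z_k *)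
  (forall k, (1 <= k)%N -> forall s m,
     stable_law P (fun w => ln (Zlow X (fun j => j%:R) (fun _ => 1) a k w))
       alpha beta s m ->
     a k = expR m) ->
  forall k, (1 <= k)%N ->
    let Y := Ywealth X (fun j => j%:R) (fun _ => 1) k in
    let Z := Zlow X (fun j => j%:R) (fun _ => 1) a k in
    let mu_k := mu + ln ((expR (mu * k%:R) - 1) / (expR mu - 1)) in
    let sigma_k := (sigma `^ alpha *
        (1 + \sum_(1 <= j < k)
               (1 - (expR (mu * j%:R) - 1) / (expR (mu * k%:R) - 1)) `^ alpha))
        `^ alpha^-1 in
    (\forall w \ae P, Z w <= Y w) /\
    stable_law P (fun w => ln (Z w)) alpha beta sigma_k mu_k.
Proof.
Proof.
move=> hal hbe hsg hX al1 mu0 apos ahyp k k1.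
exact: (final hal hbe hsg hX al1 mu0 apos ahyp k1).
Qed.
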